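(* Let $N\ge K\ge1$, $C>0$, $\epsilon_p,\epsilon_l>0$, and let $\bm U=(U_1,\dots,U_N)$ be a vector of positive feature importances (fixed independently of the input). Consider the R$^3$eLU-forward procedure with dynamic privacy budget allocation: compute $\hat{\bm v}=ClipK(\bm v,C,K,N)$; set $p_i=\frac12+\frac{U_i}{\|\bm U\|_\infty}\big(\frac{e^{\epsilon_p/K}}{1+e^{\epsilon_p/K}}-\frac12\big)$; independently draw $s_i\sim\mathrm{Bernoulli}(p_i)$ and Laplace noise $L_i$ for coordinate $i$ calibrated to the allocated budget $\epsilon_l U_i/\sum_{j=1}^N U_j$ (i.e. $L_i\sim\mathrm{Lap}\big(0,\,2KC\sum_{j}U_j/(\epsilon_l U_i)\big)$); output $\tilde a_i=\max(\hat v_i+L_i,0)$ if $s_i=1$ and $\tilde a_i=0$ otherwise. Then this procedure is still $\epsilon$-differentially private with $\epsilon=\epsilon_p+\epsilon_l$.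
   Context: $ClipK(\bm{v},C,K,N)$: given $\bm{v}\in\mathbb{R}^N$, keep the $K$ largest entries of $\bm{v}$ and set all other entries to $0$; then clip each kept entry into the interval $[0,C]$. $\mathrm{Lap}(0,b)$ is the Laplace distribution with mean $0$ and scale $b$. A randomized mechanism $\mathcal{M}$ is $\epsilon$-DP if for any two inputs $x,x'$ and every measurable output set $S$, $\Pr[\mathcal{M}(x)\in S]\le e^{\epsilon}\Pr[\mathcal{M}(x')\in S]$. *)

(* Defs.v *)
From HB Require Import structures.
From mathcomp Require Import all_boot all_order all_algebra.
From mathcomp Require Import all_classical all_reals all_analysis.
Set Implicit Arguments. Unset Strict Implicit. Unset Printing Implicit Defensive.
Import Order.TTheory GRing.Theory Num.Theory.
Local Open Scope classical_set_scope.
Local Open Scope ring_scope.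

Definition topk_rank (R : realType) (N : nat) (v : 'I_N -> R) (i : 'I_N) : nat :=
  #|[set j : 'I_N | (v i < v j) || ((v j == v i) && (j < i)%N)]|.

(* ClipK(v, C, K, N): keep the K largest entries (ties broken by index),
   zero the others, then clip kept entries into [0, C]. *)
Definition clipK (R : realType) (N : nat) (v : 'I_N -> R) (C : R) (K : nat)
  : 'I_N -> R :=
  fun i => if (topk_rank v i < K)%N then Num.min (Num.max (v i) 0) C else 0.

Definition laplace_pdf (R : realType) (b : R) (x : R) : R :=
  (2 * b)^-1 * expR (- (`|x| / b)).

Definition linf_norm (R : realType) (N : nat) (U : 'I_N -> R) : R :=
  \big[Num.max/0]_(i < N) `|U i|.
Definition vsum (R : realType) (N : nat) (U : 'I_N -> R) : R := \sum_(i < N) U i.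

Definition sel_prob (R : realType) (N K : nat) (eps_p : R) (U : 'I_N -> R)
  (i : 'I_N) : R :=
  2^-1 + U i / linf_norm U *
    (expR (eps_p / K%:R) / (1 + expR (eps_p / K%:R)) - 2^-1).

Definition lap_scale (R : realType) (N K : nat) (C eps_l : R) (U : 'I_N -> R)
  (i : 'I_N) : R :=
  2 * K%:R * C * vsum U / (eps_l * U i).

Definition r3elu_out (R : realType) (N K : nat) (C : R) (v : 'I_N -> R)
  (s : 'I_N -> bool) (L : 'I_N -> R) : N.-tuple R :=
  [tuple (if s i then Num.max (clipK v C K i + L i) 0 else 0) | i < N].

Definition mutually_independent d (T : measurableType d) (R : realType)
  (P : probability T R) (N : nat) (s : 'I_N -> T -> bool) (L : 'I_N -> T -> R)
  : Prop :=
  forall (B : 'I_N -> set bool) (A : 'I_N -> set R),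
    (forall i, measurable (A i)) ->
    P (\big[setI/setT]_(i < N) (s i @^-1` B i `&` L i @^-1` A i)) =
    (\prod_(i < N) (P (s i @^-1` B i) * P (L i @^-1` A i)))%E.

(* Main.v *)
Require Import Defs.
From HB Require Import structures.
From mathcomp Require Import all_boot all_order all_algebra.
From mathcomp Require Import all_classical all_reals all_analysis.
From mathcomp Require Import ring lra.
From mathcomp Require Import measurable_realfun.
Import Order.TTheory GRing.Theory Num.Theory.
Local Open Scope classical_set_scope.
Local Open Scope ring_scope.

Section P1.
Context (R : realType).
Local Open Scope ereal_scope.

Lemma shift_meas (t : R) : measurable_fun (T:=measurableTypeR R) (U:=measurableTypeR R) [set: R] (fun x : R => x + t)%R.
Proof. by apply: measurable_realfun.measurable_funD => //; exact: measurable_cst. Qed.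

Lemma leb_shift (t : R) (A : set R) : measurable A ->
  pushforward lebesgue_measure (fun x : R => x + t)%R A = lebesgue_measure A.
Proof.
move=> mA.
have := @lebesgue_measure_unique R (measure_function_pushforward__canonical__measure_function_Measure lebesgue_measure (shift_meas t)).
move=> H; rewrite -H //.
move=> X [[a b] _ <-] /=; rewrite /pushforward.
have -> : (fun x : R => x + t)%R @^-1` `]a, b]%classic = `](a - t)%R, (b - t)%R]%classic.
  apply/seteqP; split => x /=; rewrite !in_itv /=.
    by rewrite ltrBlDr lerBrDr.
  by rewrite ltrBlDr lerBrDr.
rewrite !lebesgue_measure_itv /= !lte_fin ltrD2r.
case: ifP => // _; congr (_%:E); rewrite opprB; lra.
Qed.

Lemma pdf_meas (b : R) : measurable_fun [set: R] (fun x : R => ((laplace_pdf b x)%:E : \bar R)).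
Proof.
apply/measurable_EFinP; rewrite /laplace_pdf.
apply: measurable_funM => //.
apply: measurableT_comp; first exact: measurable_expR.
apply: measurableT_comp; first exact: oppr_measurable.
exact: measurable_funM.
Qed.

Lemma pdf_ge0 (b : R) x : (0 < b)%R -> (0 <= laplace_pdf b x)%R.
Proof.
move=> b0; rewrite /laplace_pdf; apply: mulr_ge0; last exact: expR_ge0.
by rewrite invr_ge0; apply: mulr_ge0 => //; apply: ltW.
Qed.

Lemma pdf_shift_le (b t y : R) : (0 < b)%R ->
  (laplace_pdf b (y - t) <= expR (`|t| / b) * laplace_pdf b y)%R.
Proof.
move=> b0; rewrite /laplace_pdf mulrCA; apply: ler_wpM2l.
  by rewrite invr_ge0; apply: mulr_ge0 => //; apply: ltW.
rewrite -expRD ler_expR -mulNr -mulrBl ler_pM2r ?invr_gt0 //.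
have := ler_normD (y - t)%R t; rewrite subrK; lra.
Qed.

Lemma lap_shift (b t : R) (E : set R) : (0 < b)%R -> measurable E ->
  \int[lebesgue_measure]_(x in (fun x => x + t)%R @^-1` E) (laplace_pdf b x)%:E <=
  (expR (`|t| / b))%:E * \int[lebesgue_measure]_(x in E) (laplace_pdf b x)%:E.
Proof.
move=> b0 mE.
have mpdft : measurable_fun [set: R] (fun y : R => ((laplace_pdf b (y - t))%:E : \bar R)).
  apply: (measurableT_comp (pdf_meas b)).
  by apply: measurable_funD => //; exact: measurable_cst.
rewrite [X in X <= _](_ : _ = \int[lebesgue_measure]_(x in (fun x => x + t)%R @^-1` E)
    ((fun y => (laplace_pdf b (y - t))%:E) \o (fun x => x + t)%R) x); last first.
  by apply: eq_integral => x _ /=; rewrite addrK.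
rewrite -(@ge0_integral_pushforward _ _ _ _ _ _ (shift_meas t) lebesgue_measure) //; last first.
- by move=> y _; rewrite lee_fin pdf_ge0.
- exact: measurable_funS mpdft.
rewrite (@eq_measure_integral _ _ _ _ lebesgue_measure); last first.
  by move=> ? A mA _; exact (leb_shift t A mA).
  exact: shift_meas.
rewrite -ge0_integralZl_EFin //; last first.
- exact: measurable_funS (pdf_meas b).
- by move=> y _; rewrite lee_fin pdf_ge0.
apply: ge0_le_integral => //.
- by move=> y _; rewrite lee_fin pdf_ge0.
- exact: measurable_funS mpdft.
- apply/measurable_EFinP; apply: measurable_funM => //.
  by apply/measurable_EFinP; exact: measurable_funS (pdf_meas b).
- by move=> y _; rewrite lee_fin pdf_shift_le.
Qed.
End P1.

Lemma bigsetIP (I A : Type) (r : seq I) (p : pred I) (F : I -> set A) (w : A) :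
  (\big[setI/setT]_(i <- r | p i) F i) w <-> (forall i, List.In i r -> p i -> F i w).
Proof.
elim: r => [|a r IH]; first by rewrite big_nil; split.
rewrite big_cons; case: ifP => pa.
  split.
    by move=> [Fa /IH H] i /= [<-|ir] pi //; exact: H.
  by move=> H; split; [apply: H => //; left|apply/IH => i ir; apply: H; right].
rewrite IH; split => H i.
  by move=> /= [<-|ir]; [rewrite pa|exact: H].
by move=> ir; apply: H; right.
Qed.

Lemma bigsetUP (I : eqType) (A : Type) (r : seq I) (p : pred I) (F : I -> set A) (w : A) :
  (\big[setU/set0]_(i <- r | p i) F i) w <-> (exists i, [/\ i \in r, p i & F i w]).
Proof.
elim: r => [|a r IH]; first by rewrite big_nil; split => // -[i []].
rewrite big_cons; case: ifP => pa.
  split.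
    move=> [Fa|/IH [i [ir pi Fi]]]; first by exists a; rewrite mem_head.
    by exists i; rewrite in_cons ir orbT.
  move=> [i []]; rewrite in_cons => /orP[/eqP ->|ir] pi Fi; first by left.
  by right; apply/IH; exists i.
rewrite IH; split => -[i [ir pi Fi]]; exists i; split => //.
  by rewrite in_cons ir orbT.
by move: ir; rewrite in_cons => /orP[/eqP ai|//]; move: pa; rewrite -ai pi.
Qed.

Lemma In_index_enum (I : finType) (i : I) : List.In i (index_enum I).
Proof.
have := mem_index_enum i; elim: (index_enum I) => //= a r IH.
by rewrite in_cons => /orP[/eqP ->|/IH]; [left|right].
Qed.

Section fadd.
Local Open Scope ereal_scope.
Context (R : realType) (d : measure_display) (T : measurableType d) (mu : {measure set T -> \bar R}).

Lemma measure_seq_disj (I : eqType) (r : seq I) (p : pred I) (F : I -> set T) :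
  uniq r -> (forall i, measurable (F i)) ->
  (forall i j, i != j -> F i `&` F j = set0) ->
  mu (\big[setU/set0]_(i <- r | p i) F i) = \sum_(i <- r | p i) mu (F i).
Proof.
move=> + mF dF; elim: r => [|a r IH]; first by rewrite !big_nil measure0.
move=> /= /andP[ar ur]; rewrite !big_cons; case: ifP => pa; last exact: IH ur.
rewrite measureU //.
- by congr (_ + _); exact: IH ur.
- by apply: bigsetU_measurable => i _; exact: mF.
- apply/seteqP; split => // w [Fa /bigsetUP [i [ir _ Fi]]].
  have ai : a != i by apply/eqP => ai; move: ar; rewrite ai; rewrite ir.
  by have := dF _ _ ai; rewrite -[_ `&` _]/(fun x => F a x /\ F i x) => /(congr1 (fun S => S w)) /= <-.
Qed.
End fadd.

Section eprod.
Local Open Scope ereal_scope.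
Context (R : realType).
Lemma lee_prod_ge0 (I : Type) (r : seq I) (p : pred I) (f g : I -> \bar R) :
  (forall i, p i -> 0 <= f i) -> (forall i, p i -> f i <= g i) ->
  \prod_(i <- r | p i) f i <= \prod_(i <- r | p i) g i.
Proof.
move=> f0 fg; elim: r => [|a r IH]; first by rewrite !big_nil.
rewrite !big_cons; case: ifP => pa //.
apply: lee_pmul => //; first exact: f0.
exact: prode_ge0.
by apply: fg.
Qed.
End eprod.

Section P2.
Local Open Scope ereal_scope.
Context (R : realType) (N : nat) (d : measure_display) (T : measurableType d)
  (P : probability T R) (s : 'I_N -> T -> bool) (L : 'I_N -> T -> R).
Context (ms : forall i, measurable_fun [set: T] (s i))
  (mL : forall i, measurable_fun [set: T] (L i))
  (indep : mutually_independent P s L).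

Definition outc (c : R) (b : bool) (x : R) : R := if b then Num.max (c + x)%R 0%R else 0%R.
Definition ev i (c : R) (B : set R) := [set w | B (outc c (s i w) (L i w))].
Definition Gset (c : R) (B : set R) := [set x : R | B (Num.max (c + x)%R 0%R)].
Definition Hset (B : set R) := [set _ : R | B 0%R].
Definition atom i (b : bool) (c : R) (B : set R) :=
  s i @^-1` [set b] `&` L i @^-1` (if b then Gset c B else Hset B).

Lemma mpre_s i (b : bool) : measurable (s i @^-1` [set b]).
Proof. by rewrite -[_ @^-1` _]setTI; exact: (ms i measurableT). Qed.

Lemma mpre_L i (A : set R) : measurable A -> measurable (L i @^-1` A).
Proof. by move=> mA; rewrite -[_ @^-1` _]setTI; exact: (mL i measurableT). Qed.

Lemma mGset c B : measurable B -> measurable (Gset c B).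
Proof.
move=> mB; rewrite /Gset -[X in measurable X]setTI.
have mf : measurable_fun [set: R] (fun x : R => Num.max (c + x)%R 0%R).
  apply: (@measurable_maxr _ _ _ _ (fun x : R => (c + x)%R) (fun=> 0%R)).
    by apply: measurable_funD => //; exact: measurable_cst.
  exact: measurable_cst.
exact: (mf measurableT).
Qed.

Lemma mHset B : measurable (Hset B).
Proof. by rewrite /Hset; case: (pselect (B 0%R)) => h; [rewrite (_ : [set _ | _] = setT) //; apply/seteqP; split|rewrite (_ : [set _ | _] = set0) //; apply/seteqP; split]. Qed.

Lemma matom i b c B : measurable B -> measurable (atom i b c B).
Proof.
move=> mB; apply: measurableI; first exact: mpre_s.
by apply: mpre_L; case: b; [exact: mGset|exact: mHset].
Qed.

Lemma ev_bigsplit (c : 'I_N -> R) (B : 'I_N -> set R) :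
  \big[setI/setT]_(i < N) ev i (c i) (B i) =
  \big[setU/set0]_(z : {ffun 'I_N -> bool})
     \big[setI/setT]_(i < N) atom i (z i) (c i) (B i).
Proof.
apply/seteqP; split => w.
  move/bigsetIP => H; apply/bigsetUP; exists [ffun i => s i w]; split => //.
  apply/bigsetIP => i ii _; rewrite ffunE /atom; split => //=.
  have := H i ii isT; rewrite /ev /outc /=.
  by case: (s i w).
move/bigsetUP => [z [_ _ /bigsetIP H]]; apply/bigsetIP => i ii _.
have [/= szi] := H i ii isT; rewrite /ev /outc /= szi.
by case: (z i).
Qed.

Lemma atoms_disj (c : 'I_N -> R) (B : 'I_N -> set R) (z z' : {ffun 'I_N -> bool}) :
  z != z' ->
  \big[setI/setT]_(i < N) atom i (z i) (c i) (B i) `&`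
  \big[setI/setT]_(i < N) atom i (z' i) (c i) (B i) = set0.
Proof.
move=> zz; apply/seteqP; split => // w [/bigsetIP H1 /bigsetIP H2].
have [i zi] : exists i, z i != z' i.
  apply/existsP; apply: contraNT zz => /existsPn h; apply/eqP/ffunP => i.
  by have := h i; rewrite negbK => /eqP.
have := H1 i (In_index_enum _ i) isT; have := H2 i (In_index_enum _ i) isT.
by move=> [/= e1 _] [/= e2 _]; move: zi; rewrite -e1 -e2 eqxx.
Qed.


Lemma P_ev (c : 'I_N -> R) (B : 'I_N -> set R) : (forall i, measurable (B i)) ->
  P (\big[setI/setT]_(i < N) ev i (c i) (B i)) =
  \sum_(z : {ffun 'I_N -> bool}) \prod_(i < N)
     (P (s i @^-1` [set z i]) *
      P (L i @^-1` (if z i then Gset (c i) (B i) else Hset (B i)))).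
Proof.
move=> mB; rewrite ev_bigsplit measure_seq_disj //.
- apply: eq_bigr => z _.
  apply: (indep (fun i => [set z i]) (fun i => if z i then Gset (c i) (B i) else Hset (B i))).
  by move=> i; case: (z i); [exact: mGset|exact: mHset].
- exact: index_enum_uniq.
- by move=> z; apply: bigsetI_measurable => i _; exact: matom.
- by move=> z z' zz; exact: atoms_disj.
Qed.

Lemma Gset_shift (c c' : R) B :
  Gset c B = (fun x => x + (c - c'))%R @^-1` Gset c' B.
Proof.
apply/seteqP; split => x /=; rewrite /Gset /=;
  by have -> : (c' + (x + (c - c')) = c + x)%R by ring.
Qed.

Lemma rect_le (c c' : 'I_N -> R) (B : 'I_N -> set R) (k : 'I_N -> R) :
  (forall i, measurable (B i)) -> (forall i, 0 <= k i)%R ->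
  (forall i E, measurable E ->
     P (L i @^-1` ((fun x => x + (c i - c' i))%R @^-1` E)) <=
     (expR (k i))%:E * P (L i @^-1` E)) ->
  P (\big[setI/setT]_(i < N) ev i (c i) (B i)) <=
  (expR (\sum_(i < N) k i))%:E * P (\big[setI/setT]_(i < N) ev i (c' i) (B i)).
Proof.
move=> mB k0 Hs; rewrite !P_ev // ge0_sume_distrr; last first.
  by move=> z _; apply: prode_ge0 => i _; apply: mule_ge0.
apply: lee_sum => z _.
rewrite expR_sum -prodEFin -big_split /=.
apply: lee_prod_ge0 => i _; first by apply: mule_ge0.
rewrite muleCA; apply: lee_pmul => //.
case: (z i).
  by rewrite (Gset_shift (c i) (c' i)); apply: Hs; exact: mGset.
rewrite -[X in X <= _]mul1e; apply: lee_pmul => //.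
by rewrite lee_fin -expR0 ler_expR.
Qed.
End P2.

Section P3.
Set Implicit Arguments.
Local Open Scope ereal_scope.
Context (R : realType) (N : nat).

Definition code m (A : 'I_m -> 'I_N -> set R) (t : N.-tuple R) : {ffun 'I_m * 'I_N -> bool} :=
  [ffun p => `[< A p.1 p.2 (tnth t p.2) >]].
Definition Bz m (A : 'I_m -> 'I_N -> set R) (z : {ffun 'I_m * 'I_N -> bool}) (i : 'I_N) : set R :=
  \big[setI/setT]_(j < m) (if z (j, i) then A j i else ~` A j i).

Lemma BzP m A z (t : N.-tuple R) : (forall i, Bz A z i (tnth t i)) <-> @code m A t = z.
Proof.
split.
  move=> H; apply/ffunP => -[j i]; rewrite ffunE /=.
  have /bigsetIP := H i => /(_ j (In_index_enum _ j) isT).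
  by case: (z (j, i)) => h; [apply/asboolP|apply/asboolP].
move=> <- i; apply/bigsetIP => j _ _; rewrite ffunE /=.
by case: asboolP.
Qed.

Lemma mBz m (A : 'I_m -> 'I_N -> set R) z i : (forall j i, measurable (A j i)) -> measurable (Bz A z i).
Proof.
move=> mA; apply: bigsetI_measurable => j _.
by case: (z (j, i)); [exact: mA|apply: measurableC; exact: mA].
Qed.

Lemma pre_decomp (X : Type) (Y : X -> N.-tuple R) m (A : 'I_m -> 'I_N -> set R) (Z : pred _) :
  Y @^-1` [set t | Z (code A t)] =
  \big[setU/set0]_(z | Z z) \big[setI/setT]_(i < N) [set w | Bz A z i (tnth (Y w) i)].
Proof.
apply/seteqP; split => w /=.
  move=> Zw; apply/bigsetUP; exists (code A (Y w)); split => //.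
    exact: mem_index_enum.
  apply/bigsetIP => i _ _ /=.
  by move: i; apply/BzP.
move/bigsetUP => [z [_ Zz /bigsetIP H]].
suff -> : code A (Y w) = z by [].
by apply/BzP => i; exact: (H i (In_index_enum _ i) isT).
Qed.

Lemma pre_disj (X : Type) (Y : X -> N.-tuple R) m (A : 'I_m -> 'I_N -> set R) z z' : z != z' ->
  \big[setI/setT]_(i < N) [set w | Bz A z i (tnth (Y w) i)] `&`
  \big[setI/setT]_(i < N) [set w | Bz A z' i (tnth (Y w) i)] = set0.
Proof.
move=> zz; apply/seteqP; split => // w [/bigsetIP H1 /bigsetIP H2].
have e1 : code A (Y w) = z by apply/BzP => i; exact: (H1 i (In_index_enum _ i) isT).
have e2 : code A (Y w) = z' by apply/BzP => i; exact: (H2 i (In_index_enum _ i) isT).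
by move: zz; rewrite -e1 -e2 eqxx.
Qed.

Definition Acl : set (set (N.-tuple R)) :=
  [set S | exists m (A : 'I_m -> 'I_N -> set R) (Z : pred {ffun 'I_m * 'I_N -> bool}),
     (forall j i, measurable (A j i)) /\ S = [set t | Z (code A t)]].

Lemma Acl_meas S : Acl S -> measurable S.
Proof.
move=> [m [A [Z [mA ->]]]].
rewrite -[X in measurable X](@preimage_id _ [set t | Z (code A t)]) (pre_decomp id).
apply: bigsetU_measurable => z _; apply: bigsetI_measurable => i _.
rewrite -[X in measurable X]setTI.
exact (@measurable_tnth _ R N i measurableT _ (@mBz m A z i mA)).
Qed.

Lemma Acl_common S1 S2 : Acl S1 -> Acl S2 ->
  exists m (A : 'I_m -> 'I_N -> set R) (Z1 Z2 : pred {ffun 'I_m * 'I_N -> bool}),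
    [/\ (forall j i, measurable (A j i)), S1 = [set t | Z1 (code A t)] &
        S2 = [set t | Z2 (code A t)]].
Proof.
move=> [m1 [A1 [Z1 [mA1 ->]]]] [m2 [A2 [Z2 [mA2 ->]]]].
pose A (j : 'I_(m1 + m2)) := match fintype.split j with inl a => A1 a | inr b => A2 b end.
exists (m1 + m2)%N, A,
  (fun z => Z1 [ffun p : 'I_m1 * 'I_N => z (lshift m2 p.1, p.2)]),
  (fun z => Z2 [ffun p : 'I_m2 * 'I_N => z (rshift m1 p.1, p.2)]).
split.
- by move=> j i; rewrite /A; case: (fintype.split j).
- apply/seteqP; split => t /=.
  + suff -> : [ffun p : 'I_m1 * 'I_N => code A t (lshift m2 p.1, p.2)] = code A1 t by [].
    apply/ffunP => p; rewrite !ffunE /A /=.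
    by have /= -> := @unsplitK m1 m2 (inl p.1).
  + suff -> : [ffun p : 'I_m1 * 'I_N => code A t (lshift m2 p.1, p.2)] = code A1 t by [].
    apply/ffunP => p; rewrite !ffunE /A /=.
    by have /= -> := @unsplitK m1 m2 (inl p.1).
- apply/seteqP; split => t /=.
  + suff -> : [ffun p : 'I_m2 * 'I_N => code A t (rshift m1 p.1, p.2)] = code A2 t by [].
    apply/ffunP => p; rewrite !ffunE /A /=.
    by have /= -> := @unsplitK m1 m2 (inr p.1).
  + suff -> : [ffun p : 'I_m2 * 'I_N => code A t (rshift m1 p.1, p.2)] = code A2 t by [].
    apply/ffunP => p; rewrite !ffunE /A /=.
    by have /= -> := @unsplitK m1 m2 (inr p.1).
Qed.

Lemma Acl_setring : setring Acl.
Proof.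
split.
- exists 0%N, (fun _ _ => set0), pred0; split => //.
  by apply/seteqP; split.
- move=> S1 S2 H1 H2; have [m [A [Z1 [Z2 [mA -> ->]]]]] := Acl_common H1 H2.
  exists m, A, (fun z => Z1 z || Z2 z); split => //.
  apply/seteqP; split => t /=; first by case=> ->; rewrite ?orbT.
  by case/orP; [left|right].
- move=> S1 S2 H1 H2; have [m [A [Z1 [Z2 [mA -> ->]]]]] := Acl_common H1 H2.
  exists m, A, (fun z => Z1 z && ~~ Z2 z); split => //.
  apply/seteqP; split => t /=; first by case=> -> /negP ->.
  by case/andP => -> /negP.
Qed.

End P3.

Section P3b.
Local Open Scope ereal_scope.
Context (R : realType) (N : nat) (d : measure_display) (T : measurableType d)
  (P : probability T R) (Y1 Y2 : T -> N.-tuple R) (k : R).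
Context (mY1 : forall i, measurable_fun [set: T] (fun w => tnth (Y1 w) i))
  (mY2 : forall i, measurable_fun [set: T] (fun w => tnth (Y2 w) i))
  (k0 : (0 <= k)%R)
  (Hrect : forall B : 'I_N -> set R, (forall i, measurable (B i)) ->
     P (\big[setI/setT]_(i < N) [set w | B i (tnth (Y1 w) i)]) <=
     k%:E * P (\big[setI/setT]_(i < N) [set w | B i (tnth (Y2 w) i)])).

Lemma mY (Y : T -> N.-tuple R) : (forall i, measurable_fun [set: T] (fun w => tnth (Y w) i)) ->
  measurable_fun [set: T] Y.
Proof. by move=> H; apply/measurable_fun_tnthP => i; exact: H. Qed.

Lemma mpre (Y : T -> N.-tuple R) (S : set (N.-tuple R)) :
  measurable_fun [set: T] Y -> measurable S -> measurable (Y @^-1` S).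
Proof. by move=> mYY mS; rewrite -[X in measurable X]setTI; exact: mYY. Qed.

Lemma mcyl (Y : T -> N.-tuple R) (B : 'I_N -> set R) :
  (forall i, measurable_fun [set: T] (fun w => tnth (Y w) i)) ->
  (forall i, measurable (B i)) ->
  measurable (\big[setI/setT]_(i < N) [set w | B i (tnth (Y w) i)]).
Proof.
move=> H mB; apply: bigsetI_measurable => i _.
rewrite -[X in measurable X]setTI; exact: (H i measurableT _ (mB i)).
Qed.

Definition Mcl : set (set (N.-tuple R)) :=
  [set S | measurable S /\ P (Y1 @^-1` S) <= k%:E * P (Y2 @^-1` S)].

Lemma Acl_Mcl : @Acl R N `<=` Mcl.
Proof.
move=> S AS; split; first exact: Acl_meas.
case: AS => m [A [Z [mA ->]]].
rewrite !pre_decomp !measure_seq_disj //; first last.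
- by move=> z z' zz; exact: pre_disj.
- by move=> z; apply: mcyl => // i; exact: mBz.
- exact: index_enum_uniq.
- by move=> z z' zz; exact: pre_disj.
- by move=> z; apply: mcyl => // i; exact: mBz.
- exact: index_enum_uniq.
rewrite ge0_sume_distrr; last by move=> z _; exact: measure_ge0.
apply: lee_sum => z _; apply: Hrect => i; exact: mBz.
Qed.

Lemma Mcl_monotone : monotone Mcl.
Proof.
have mY1' := mY _ mY1; have mY2' := mY _ mY2.
split.
- move=> F ndF MF; split.
    by apply: bigcup_measurable => n _; case: (MF n).
  rewrite !preimage_bigcup.
  have c1 := @nondecreasing_cvg_mu _ _ _ P (fun n => Y1 @^-1` F n).
  have c2 := @nondecreasing_cvg_mu _ _ _ P (fun n => Y2 @^-1` F n).
  have h1 : forall n, measurable (Y1 @^-1` F n) by move=> n; apply: mpre => //; case: (MF n).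
  have h2 : forall n, measurable (Y2 @^-1` F n) by move=> n; apply: mpre => //; case: (MF n).
  have nd1 : {homo (fun n => Y1 @^-1` F n) : n m / (n <= m)%N >-> (n <= m)%O}.
    by move=> n m nm; apply/subsetPset => w /=; move/subsetPset: (ndF n m nm); apply.
  have nd2 : {homo (fun n => Y2 @^-1` F n) : n m / (n <= m)%N >-> (n <= m)%O}.
    by move=> n m nm; apply/subsetPset => w /=; move/subsetPset: (ndF n m nm); apply.
  have u1 : measurable (\bigcup_n (Y1 @^-1` F n)) by apply: bigcup_measurable => n _; exact: h1.
  have u2 : measurable (\bigcup_n (Y2 @^-1` F n)) by apply: bigcup_measurable => n _; exact: h2.
  move: (c1 h1 u1 nd1) (c2 h2 u2 nd2) => {}c1 {}c2.
  have c2' : (fun n => k%:E * P (Y2 @^-1` F n)) @ \oo --> k%:E * P (\bigcup_n (Y2 @^-1` F n)).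
    apply: cvgeM => //; first by apply: mule_def_fin => //; exact: fin_num_measure.
    exact: cvg_cst.
  rewrite -(cvg_lim _ c1) // -(cvg_lim _ c2') //.
  apply: lee_lim; [exact: cvgP c1|exact: cvgP c2'|].
  by apply: nearW => n; case: (MF n).
- move=> F niF MF; split.
    by apply: bigcapT_measurable => n; case: (MF n).
  rewrite !preimage_bigcap.
  have h1 : forall n, measurable (Y1 @^-1` F n) by move=> n; apply: mpre => //; case: (MF n).
  have h2 : forall n, measurable (Y2 @^-1` F n) by move=> n; apply: mpre => //; case: (MF n).
  have ni1 : {homo (fun n => Y1 @^-1` F n) : n m / (n <= m)%N >-> (m <= n)%O}.
    by move=> n m nm; apply/subsetPset => w /=; move/subsetPset: (niF n m nm); apply.
  have ni2 : {homo (fun n => Y2 @^-1` F n) : n m / (n <= m)%N >-> (m <= n)%O}.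
    by move=> n m nm; apply/subsetPset => w /=; move/subsetPset: (niF n m nm); apply.
  have u1 : measurable (\bigcap_n (Y1 @^-1` F n)) by apply: bigcapT_measurable => n; exact: h1.
  have u2 : measurable (\bigcap_n (Y2 @^-1` F n)) by apply: bigcapT_measurable => n; exact: h2.
  have f1 : P (Y1 @^-1` F 0%N) < +oo by rewrite -ge0_fin_numE //; exact: fin_num_measure.
  have f2 : P (Y2 @^-1` F 0%N) < +oo by rewrite -ge0_fin_numE //; exact: fin_num_measure.
  have c1 := @nonincreasing_cvg_mu _ _ _ P (fun n => Y1 @^-1` F n) f1 h1 u1 ni1.
  have c2 := @nonincreasing_cvg_mu _ _ _ P (fun n => Y2 @^-1` F n) f2 h2 u2 ni2.
  have c2' : (fun n => k%:E * P (Y2 @^-1` F n)) @ \oo --> k%:E * P (\bigcap_n (Y2 @^-1` F n)).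
    apply: cvgeM => //; first by apply: mule_def_fin => //; exact: fin_num_measure.
    exact: cvg_cst.
  rewrite -(cvg_lim _ c1) // -(cvg_lim _ c2') //.
  apply: lee_lim; [exact: cvgP c1|exact: cvgP c2'|].
  by apply: nearW => n; case: (MF n).
Qed.

Lemma Mcl_all (S : set (N.-tuple R)) : measurable S ->
  P (Y1 @^-1` S) <= k%:E * P (Y2 @^-1` S).
Proof.
move=> mS.
have sub : <<sr @Acl R N >> `<=` Mcl.
  rewrite -g_monotone_g_sigma_ring; last exact: Acl_setring.
  apply: smallest_sub; [exact: Mcl_monotone|exact: Acl_Mcl].
suff : <<sr @Acl R N >> S by move/sub => [].
move: mS; apply: smallest_sub.
- split.
  + by case: (smallest_sigma_ring (@Acl R N)).
  + move=> A GA; case: (smallest_sigma_ring (@Acl R N)) => _ GD _; apply: GD => //.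
    apply: sub_g_sigma_ring; exists 0%N, (fun _ _ => set0), predT; split => //.
    by apply/seteqP; split.
  + by case: (smallest_sigma_ring (@Acl R N)).
- move=> X /bigsetUP [i [_ _ [B mB <-]]].
  apply: sub_g_sigma_ring; exists 1%N, (fun _ _ => B), (fun z => z (ord0, i)); split => //.
  apply/seteqP; split => t /=; rewrite /code ffunE /=; first by move=> [_ Bt]; exact/asboolP.
  by move/asboolP.
Qed.
End P3b.
Unset Implicit Arguments.

Lemma clip_range (R : realType) (N : nat) (v : 'I_N -> R) (C : R) (K : nat) i :
  0 <= C -> 0 <= clipK v C K i <= C.
Proof.
move=> C0; rewrite /clipK; case: ifP => _; last by rewrite lexx C0.
by rewrite ge_min lexx orbT le_min C0 le_max lexx orbT.
Qed.

Lemma clip_dist (R : realType) (N : nat) (v v' : 'I_N -> R) (C : R) (K : nat) i :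
  0 <= C -> `|clipK v C K i - clipK v' C K i| <= C.
Proof.
move=> C0; have /andP[a1 a2] := clip_range _ _ v C K i C0.
have /andP[b1 b2] := clip_range _ _ v' C K i C0.
rewrite ler_norml; apply/andP; split; lra.
Qed.

Lemma mout (R : realType) (N : nat) (d : measure_display) (T : measurableType d)
  (s : 'I_N -> T -> bool) (L : 'I_N -> T -> R)
  (ms : forall i, measurable_fun [set: T] (s i))
  (mL : forall i, measurable_fun [set: T] (L i)) (c : R) i :
  measurable_fun [set: T] (fun w => outc R c (s i w) (L i w)).
Proof.
move=> _ A mA; rewrite setTI.
have -> : (fun w => outc R c (s i w) (L i w)) @^-1` A =
    atom R N d T s L i true c A `|` atom R N d T s L i false c A.
  apply/seteqP; split => w /=; rewrite /atom /outc /=.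
    by case: (s i w) => h; [left|right].
  by case=> -[/= -> h].
by apply: measurableU; apply: matom.
Qed.

Theorem corollary6 (R : realType) (N K : nat) (C eps_p eps_l : R)
  (U : 'I_N -> R)
  (d : measure_display) (T : measurableType d) (P : probability T R)
  (s : 'I_N -> T -> bool) (L : 'I_N -> T -> R) :
  (1 <= K)%N -> (K <= N)%N -> 0 < C -> 0 < eps_p -> 0 < eps_l ->
  (forall i, 0 < U i) ->
  (forall i, measurable_fun [set: T] (s i)) ->
  (forall i, measurable_fun [set: T] (L i)) ->
  (forall i, P (s i @^-1` [set true]) = (sel_prob K eps_p U i)%:E) ->
  (forall i (A : set R), measurable A ->
     P (L i @^-1` A) =
     (\int[lebesgue_measure]_(x in A) (laplace_pdf (lap_scale K C eps_l U i) x)%:E)%E) ->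
  mutually_independent P s L ->
  forall (v v' : 'I_N -> R) (S : set (N.-tuple R)), measurable S ->
    (P [set w | S (r3elu_out K C v (fun i => s i w) (fun i => L i w))]
     <= (expR (eps_p + eps_l))%:E *
        P [set w | S (r3elu_out K C v' (fun i => s i w) (fun i => L i w))])%E.
Proof.
move=> K1 KN C0 ep0 el0 U0 ms mL _ Llaw indep v v' S mS.
pose c i := clipK v C K i; pose c' i := clipK v' C K i.
pose b i := lap_scale K C eps_l U i.
have N0 : (0 < N)%N by apply: leq_trans KN.
pose i0 := Ordinal N0.
have vs0 : 0 < vsum U.
  rewrite /vsum (bigD1 i0) //=.
  have h1 := U0 i0.
  have h2 : 0 <= \sum_(i | i != i0) U i by apply: sumr_ge0 => i _; apply: ltW.
  lra.
have K0 : 0 < (K%:R : R) by rewrite ltr0n.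
have b0 i : 0 < b i.
  rewrite /b /lap_scale; apply: divr_gt0; last exact: mulr_gt0.
  by apply: mulr_gt0 => //; apply: mulr_gt0 => //; apply: mulr_gt0.
pose k i := C / b i.
have k0 i : 0 <= k i by apply: divr_ge0; apply: ltW.
have Hk i (E : set R) : measurable E ->
    (P (L i @^-1` ((fun x => x + (c i - c' i))%R @^-1` E)) <=
     (expR (k i))%:E * P (L i @^-1` E))%E.
  move=> mE.
  have msh : measurable_fun [set: R] (fun x : R => x + (c i - c' i)).
    by apply: measurable_funD => //; exact: measurable_cst.
  have mE' : measurable ((fun x => x + (c i - c' i)) @^-1` E).
    by rewrite -[X in measurable X]setTI; exact: msh.
  rewrite !Llaw //.
  apply: le_trans (lap_shift _ _ _ _ (b0 i) mE) _.
  apply: lee_wpmul2r.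
    by apply: integral_ge0 => x _; rewrite lee_fin; apply: pdf_ge0.
  rewrite lee_fin ler_expR ler_pM2r ?invr_gt0 //.
  by apply: clip_dist; apply: ltW.
have Hsum : \sum_(i < N) k i <= eps_p + eps_l.
  have -> : \sum_(i < N) k i = \sum_(i < N) (eps_l / (2 * K%:R * vsum U)) * U i.
    apply: eq_bigr => i _; rewrite /k /b /lap_scale.
    have := U0 i => Ui.
    field; rewrite (gt_eqF vs0) (gt_eqF K0) (gt_eqF Ui) (gt_eqF el0) (gt_eqF C0).
    done.
  rewrite -mulr_sumr -/(vsum U).
  have -> : eps_l / (2 * K%:R * vsum U) * vsum U = eps_l / (2 * K%:R).
    by field; rewrite (gt_eqF vs0) (gt_eqF K0).
  have : 1 <= (K%:R : R) by rewrite ler1n.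
  move=> K1'.
  have : eps_l / (2 * K%:R) <= eps_l.
    rewrite ler_pdivrMr; last by apply: mulr_gt0.
    rewrite -[X in X <= _]mulr1 ler_pM2l //; lra.
  lra.
apply: (Mcl_all P _ _ (expR (eps_p + eps_l))).
- move=> i; rewrite (_ : (fun w => _) = fun w => outc R (c i) (s i w) (L i w)).
    exact: mout.
  by apply: funext => w; rewrite tnth_mktuple.
- move=> i; rewrite (_ : (fun w => _) = fun w => outc R (c' i) (s i w) (L i w)).
    exact: mout.
  by apply: funext => w; rewrite tnth_mktuple.
- move=> B mB.
  rewrite (eq_bigr (fun i => ev R N d T s L i (c i) (B i))); last first.
    by move=> i _; apply/seteqP; split => w; rewrite /= tnth_mktuple.
  rewrite [X in (_ <= _ * P X)%E](eq_bigr (fun i => ev R N d T s L i (c' i) (B i))); last first.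
    by move=> i _; apply/seteqP; split => w; rewrite /= tnth_mktuple.
  apply: le_trans (rect_le _ _ _ _ _ _ _ ms mL indep c c' B k mB k0 Hk) _.
  apply: lee_wpmul2r; first exact: measure_ge0.
  by rewrite lee_fin ler_expR.
exact: mS.
Qed.
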